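(* Let $\mathcal{G}=\{(P,\lambda)\in\mathsf{Sp}(n-1,\omega)\times\mathbb{R}_+:\dim\ker(P-\lambda\,\mathrm{Id})\leq1\}$ and $\mathcal{G}_1=\{(P,\lambda)\in\mathsf{Sp}(n-1,\omega)\times\mathbb{R}_+:\dim\ker(P-\lambda\,\mathrm{Id})=1\}$. Then the map $\chi\colon\mathcal{G}\to\mathbb{R}$, $\chi(P,\mu)=\det(P-\mu\,\mathrm{Id})$, is a submersion in a neighbourhood of $\mathcal{G}_1$.
   Context: $\omega$ is the standard symplectic form on $\mathbb{R}^{2(n-1)}$, $\mathsf{Sp}(n-1,\omega)$ the corresponding real symplectic group, $\mathbb{R}_+=(0,\infty)$. $\mathcal{G}$ is an open subset of the manifold $\mathsf{Sp}(n-1,\omega)\times\mathbb{R}_+$. *)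

(* Defs.v *)
From HB Require Import structures.
From mathcomp Require Import all_boot all_order all_algebra.
From mathcomp Require Import all_classical all_reals all_analysis.
Set Implicit Arguments. Unset Strict Implicit. Unset Printing Implicit Defensive.
Import Order.TTheory GRing.Theory Num.Theory.
Import numFieldNormedType.Exports.
Local Open Scope classical_set_scope.
Local Open Scope ring_scope.

(* Standard symplectic form on R^(k+k): omega(u,v) = u^T J v with
   J = [[0, Id], [-Id, 0]]. *)
Definition symJ (R : nzRingType) (k : nat) : 'M[R]_(k + k) :=
  block_mx 0 1%:M (- 1%:M) 0.

Definition symplectic (R : nzRingType) (k : nat) : set 'M[R]_(k + k) :=
  [set P | P^T *m symJ R k *m P = symJ R k].

Definition symp_tangent (R : nzRingType) (k : nat) (P : 'M[R]_(k + k))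
  : set 'M[R]_(k + k) :=
  [set X | X^T *m symJ R k *m P + P^T *m symJ R k *m X = 0].

Definition dimker (R : fieldType) (m : nat) (P : 'M[R]_m) (l : R) : nat :=
  \rank (kermx (P - l%:M)).

Definition setG (R : realType) (k : nat) : set ('M[R]_(k + k) * R) :=
  [set x | symplectic x.1 /\ 0 < x.2 /\ (dimker x.1 x.2 <= 1)%N].
Definition setG1 (R : realType) (k : nat) : set ('M[R]_(k + k) * R) :=
  [set x | symplectic x.1 /\ 0 < x.2 /\ dimker x.1 x.2 = 1%N].

Definition chi (R : realType) (m : nat) (x : 'M[R]_m * R) : R :=
  \det (x.1 - x.2%:M).

(* chi (restricted to the manifold Sp(k) x R_+) is a submersion at x:
   its differential T_x(Sp x R_+) -> R is surjective, i.e. some tangent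
   vector (X, s) has nonzero derivative of chi along it. *)
Definition chi_submersive_at (R : realType) (k : nat) (x : 'M[R]_(k + k) * R)
  : Prop :=
  exists (X : 'M[R]_(k + k)) (s : R),
    symp_tangent x.1 X /\
    derive1 (fun t : R => chi (x.1 + t *: X, x.2 + t * s)) 0 != 0.

(* Main.v *)
Require Import Defs.
From HB Require Import structures.
From mathcomp Require Import all_boot all_order all_algebra.
From mathcomp Require Import all_classical all_reals all_analysis.
From mathcomp Require Import fingroup perm zify.
Set Implicit Arguments. Unset Strict Implicit. Unset Printing Implicit Defensive.
Import Order.TTheory GRing.Theory Num.Theory.
Import numFieldNormedType.Exports.
Local Open Scope classical_set_scope.
Local Open Scope ring_scope.

Section S.
Variable R : realType.

Lemma aff_derive (a b : R) : is_derive (0:R) (1:R) (fun t : R => a + t * b) b.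
Proof.
have h1 : is_derive (0:R) (1:R) (fun t : R => t * b) b.
  have := is_deriveM (is_derive_id (0:R) (1:R)) (is_derive_cst b (0:R) (1:R)).
  by rewrite /= scaler0 add0r -[b *: 1]/(b * 1) mulr1.
have := is_deriveD (is_derive_cst a (0:R) (1:R)) h1.
by rewrite add0r.
Qed.

Lemma prod_derive (m : nat) (a b : 'I_m -> R) :
  is_derive (0:R) (1:R) (fun t : R => \prod_(j < m) (a j + t * b j))
     (\sum_(i < m) \prod_(j < m) (if j == i then b j else a j)).
Proof.
elim: m a b => [|m IH] a b.
  rewrite big_ord0.
  have -> : (fun t : R => \prod_(j < 0) (a j + t * b j)) = cst 1.
    by apply/funext => t; rewrite big_ord0.
  exact: is_derive_cst.
have -> : (fun t : R => \prod_(j < m.+1) (a j + t * b j)) =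
   (fun t : R => \prod_(j < m) (a (widen_ord (leqnSn m) j) + t * b (widen_ord (leqnSn m) j))) *
   (fun t : R => a ord_max + t * b ord_max).
  by apply/funext => t; rewrite big_ord_recr.
have := is_deriveM (IH (fun j => a (widen_ord (leqnSn m) j)) (fun j => b (widen_ord (leqnSn m) j)))
   (aff_derive (a ord_max) (b ord_max)).
rewrite /= mul0r addr0 big_ord_recr /=.
move=> H; apply: (is_derive_eq H).
have nw : forall j : 'I_m, (widen_ord (leqnSn m) j == ord_max) = false.
  by move=> j; apply/negbTE; rewrite -val_eqE /= neq_ltn ltn_ord.
have ww : forall i j : 'I_m, (widen_ord (leqnSn m) j == widen_ord (leqnSn m) i) = (j == i).
  by move=> i j; rewrite -val_eqE.
rewrite addrC; congr (_ + _).
  rewrite big_ord_recr /= eqxx.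
  under [in RHS]eq_bigr => j _ do rewrite nw.
  under [in LHS]eq_bigr => j _ do rewrite mul0r addr0.
  by rewrite -[_ *: _]/(_ * _).
rewrite -[_ *: _]/(_ * _) mulr_sumr; apply: eq_bigr => i _.
rewrite big_ord_recr /= eq_sym nw mulrC; congr (_ * _).
Qed.

Definition rowrep m (M Y : 'M[R]_m) (i : 'I_m) : 'M[R]_m :=
  \matrix_(j, k) if j == i then Y j k else M j k.
Definition Dd m (M Y : 'M[R]_m) : R := \sum_i \det (rowrep M Y i).

Lemma is_derive_sumT (I : finType) (h : I -> R -> R) (dh : I -> R) :
  (forall i, is_derive (0:R) (1:R) (h i) (dh i)) ->
  is_derive (0:R) (1:R) (\sum_i h i) (\sum_i dh i).
Proof.
by move=> H; elim/big_ind2 : _ => // [|] *; [exact: is_derive_cst|exact: is_deriveD].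
Qed.

Lemma det_derive m (M Y : 'M[R]_m) :
  is_derive (0:R) (1:R) (fun t : R => \det (M + t *: Y)) (Dd M Y).
Proof.
have -> : (fun t : R => \det (M + t *: Y)) = \sum_(s : 'S_m)
     (fun t : R => (-1) ^+ s * \prod_i (M i (s i) + t * Y i (s i))).
  rewrite fct_sumE; apply/funext => t; apply: eq_bigr => s _.
  by congr (_ * _); apply: eq_bigr => i _; rewrite !mxE.
have -> : Dd M Y = \sum_(s : 'S_m) ((-1) ^+ s *
     \sum_(i < m) \prod_(j < m) (if j == i then Y j (s j) else M j (s j))).
  rewrite /Dd exchange_big; apply: eq_bigr => s _ /=.
  rewrite mulr_sumr; apply: eq_bigr => i _; congr (_ * _).
  by apply: eq_bigr => j _; rewrite !mxE.
apply: is_derive_sumT => s.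
exact: (is_deriveZ ((-1) ^+ s) (prod_derive (fun j => M j (s j)) (fun j => Y j (s j)))).
Qed.

Section Cont.
Variable T : topologicalType.

Lemma cont_sum (I : finType) (h : I -> T -> R) x :
  (forall i, {for x, continuous (h i)}) ->
  {for x, continuous (fun y => \sum_i h i y)}.
Proof.
move=> H; rewrite -fct_sumE.
elim/big_ind : _ => //; first exact: cst_continuous.
by move=> f g Hf Hg; apply: continuousD.
Qed.

Lemma cont_prod (I : finType) (h : I -> T -> R) x :
  (forall i, {for x, continuous (h i)}) ->
  {for x, continuous (fun y => \prod_i h i y)}.
Proof.
move=> H; rewrite -fct_prodE.
elim/big_ind : _ => //; first exact: cst_continuous.
by move=> f g Hf Hg; apply: continuousM.
Qed.

Lemma cont_det m (f : T -> 'M[R]_m) x :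
  (forall i j, {for x, continuous (fun y => f y i j)}) ->
  {for x, continuous (fun y => \det (f y))}.
Proof.
move=> H; apply: cont_sum => s.
apply: continuousM; first exact: cst_continuous.
by apply: cont_prod => i; apply: H.
Qed.

Lemma cont_mulmx m n p (f : T -> 'M[R]_(m, n)) (C : 'M[R]_(n, p)) x :
  (forall i j, {for x, continuous (fun y => f y i j)}) ->
  forall i j, {for x, continuous (fun y => (f y *m C) i j)}.
Proof.
move=> H i j.
have -> : (fun y => (f y *m C) i j) = (fun y => \sum_l f y i l * C l j).
  by apply/funext => y; rewrite mxE.
apply: cont_sum => l; apply: continuousM; first exact: H.
exact: cst_continuous.
Qed.
End Cont.

Lemma cont_fst_entry k (x : 'M[R]_k * R) i j :
  {for x, continuous (fun y : 'M[R]_k * R => y.1 i j)}.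
Proof.
apply: (@continuous_comp _ _ _ fst (fun M : 'M[R]_k => M i j)).
  exact: cvg_fst.
exact: coord_continuous.
Qed.

Lemma cont_snd k (x : 'M[R]_k * R) :
  {for x, continuous (fun y : 'M[R]_k * R => y.2)}.
Proof. exact: cvg_snd. Qed.

Lemma cont_M k (x : 'M[R]_k * R) i j :
  {for x, continuous (fun y : 'M[R]_k * R => (y.1 - y.2%:M) i j)}.
Proof.
have -> : (fun y : 'M[R]_k * R => (y.1 - y.2%:M) i j) =
   (fun y : 'M[R]_k * R => y.1 i j - y.2 * (i == j)%:R).
  by rewrite funeqE => y /=; rewrite !mxE mulr_natr.
apply: (@continuousB _ _ _ (fun y : 'M[R]_k * R => y.1 i j) (fun y : 'M[R]_k * R => y.2 * (i == j)%:R)).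
  exact: cont_fst_entry.
apply: (@continuousM _ _ (fun y : 'M[R]_k * R => y.2) (fun=> (i == j)%:R)); first exact: cont_snd.
exact: cst_continuous.
Qed.

Lemma symJ_tr k : (symJ R k)^T = - symJ R k.
Proof.
rewrite /symJ tr_block_mx opp_block_mx !trmx0 trmx1 oppr0 opprK.
by rewrite (_ : (- 1%:M)^T = - 1%:M) // linearN /= trmx1.
Qed.

Lemma symJ_sq k : symJ R k *m symJ R k = - 1%:M.
Proof.
rewrite /symJ mulmx_block !mul0mx !mulmx0 !mul1mx !mulmx1 !addr0 !add0r.
by rewrite [in RHS](scalar_mx_block k k 1) opp_block_mx oppr0.
Qed.

Lemma tangent_ok k (P S : 'M[R]_(k+k)) : symplectic P -> S^T = S ->
  symp_tangent P (P *m (symJ R k *m S)).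
Proof.
rewrite /symplectic /symp_tangent /= => HP HS.
have e1 : (P *m (symJ R k *m S))^T *m symJ R k *m P = S.
  rewrite trmx_mul -!mulmxA (mulmxA P^T) HP trmx_mul HS symJ_tr.
  by rewrite mulmxN mulNmx -mulmxA symJ_sq mulmxN mulmx1 opprK.
have e2 : P^T *m symJ R k *m (P *m (symJ R k *m S)) = - S.
  by rewrite mulmxA HP mulmxA symJ_sq mulNmx mul1mx.
by rewrite e1 e2 subrr.
Qed.

Lemma chi_derive m (P X : 'M[R]_m) (mu : R) :
  derive1 (fun t : R => chi (P + t *: X, mu + t * 0)) 0 = Dd (P - mu%:M) X.
Proof.
have -> : (fun t : R => chi (P + t *: X, mu + t * 0)) =
          (fun t : R => \det ((P - mu%:M) + t *: X)).
  rewrite funeqE => t; rewrite /chi /= mulr0 addr0.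
  by rewrite addrAC.
by rewrite derive1E; apply: derive_val; apply: det_derive.
Qed.

Definition gS k (S : 'M[R]_(k+k)) (y : 'M[R]_(k+k) * R) : R :=
  Dd (y.1 - y.2%:M) (y.1 *m (symJ R k *m S)).

Lemma gS_cont k (S : 'M[R]_(k+k)) : continuous (gS S).
Proof.
move=> x; rewrite /gS /Dd; apply: cont_sum => i; apply: cont_det => a b.
have -> : (fun y : 'M[R]_(k+k) * R => rowrep (y.1 - y.2%:M) (y.1 *m (symJ R k *m S)) i a b)
  = (fun y => if a == i then (y.1 *m (symJ R k *m S)) a b else (y.1 - y.2%:M) a b).
  by rewrite funeqE => y; rewrite mxE.
case: (a == i); last exact: cont_M.
apply: (@cont_mulmx _ _ _ _ (fun y : 'M[R]_(k+k) * R => y.1)).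
by move=> i' j'; exact: cont_fst_entry.
Qed.

Definition Uset k : set ('M[R]_(k+k) * R) :=
  \bigcup_(S in [set S : 'M[R]_(k+k) | S^T = S]) (gS S @^-1` [set r : R | r != 0]).

Lemma Uset_open k : open (@Uset k).
Proof.
apply: bigcup_open => S _; apply: open_comp; last exact: open_neq.
by move=> y _; exact: gS_cont.
Qed.

Lemma Dd_pid N (Z : 'M[R]_N) (l : 'I_N) : nat_of_ord l = N.-1 ->
  Dd (pid_mx N.-1) Z = Z l l.
Proof.
move=> hl; rewrite /Dd (bigD1 l) //= big1 ?addr0.
  rewrite det_trig; last first.
    apply/is_trig_mxP => i j ltij; rewrite !mxE.
    have : (i != l).
      rewrite -val_eqE /= hl; have := ltn_ord j; lia.
    move=> /negbTE ->.
    by rewrite (ltn_eqF ltij).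
  rewrite (bigD1 l) //= mxE eqxx big1 ?mulr1 // => i il.
  rewrite !mxE (negbTE il) eqxx /=.
  have -> : (i < N.-1)%N.
    move: il; rewrite -val_eqE /= hl; have := ltn_ord i; lia.
  by [].
move=> i il; rewrite (expand_det_row _ l) big1 // => j _.
by rewrite !mxE eq_sym (negbTE il) hl ltnn andbF mul0r.
Qed.

Lemma entry3 m n p q (A : 'M[R]_(m, n)) (B : 'M[R]_(n, p)) (C : 'M[R]_(p, q)) i j :
  (A *m B *m C) i j = (row i A *m B *m col j C) 0 0.
Proof.
rewrite !mxE; apply: eq_bigr => l _; rewrite !mxE; congr (_ * _).
by apply: eq_bigr => r _; rewrite !mxE.
Qed.

Lemma mul11 (u v : 'M[R]_1) : (u *m v) 0 0 = u 0 0 * v 0 0.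
Proof. by rewrite mxE big_ord1. Qed.

Lemma rowpos n (u : 'rV[R]_n) : u != 0 -> 0 < (u *m u^T) 0 0.
Proof.
move=> u0.
have [j uj] : exists j, u 0 j != 0.
  apply/existsP; apply: contraR u0 => /existsPn H.
  apply/eqP/matrixP => i j; rewrite !mxE (ord1 i); exact/eqP/negbNE/H.
rewrite mxE (bigD1 j) //= mxE.
have h1 : 0 < u 0 j * u 0 j by rewrite -expr2 exprn_even_gt0.
have h2 : 0 <= \sum_(i | i != j) u 0 i * u^T i 0.
  by apply: sumr_ge0 => i _; rewrite mxE -expr2 sqr_ge0.
by apply: (lt_le_trans h1); rewrite lerDl.
Qed.

Lemma G1_in_U k : @setG1 R k `<=` @Uset k.
Proof.
case=> P mu; rewrite /setG1 /= => -[HP [Hmu Hdim]].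
move: Hdim; rewrite /dimker mxrank_ker => Hdim.
set M := P - mu%:M in Hdim *.
have rkM : (\rank M = (k + k).-1 :> nat)%N.
  move: Hdim (rank_leq_row M); move: (\rank M) => r; rewrite -subn1; lia.
have N0 : (0 < k + k)%N by move: Hdim; lia.
have hl : ((k + k).-1 < k + k)%N by rewrite ltn_predL.
pose l := Ordinal hl.
set J := symJ R k.
have uJ : J \in unitmx.
  have : J *m (- J) = 1%:M by rewrite mulmxN symJ_sq opprK.
  by case/mulmx1_unit.
have uP : P \in unitmx.
  have : (invmx J *m P^T *m J) *m P = 1%:M.
    by rewrite -!mulmxA (mulmxA P^T) HP mulVmx.
  by case/mulmx1_unit.
set L := col_ebase M; set W := row_ebase M.
have uL : L \in unitmx by exact: col_ebase_unit.
have uW : W \in unitmx by exact: row_ebase_unit.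
set Q := invmx L *m P *m J.
have uQ : Q \in unitmx by rewrite !unitmx_mul unitmx_inv uL uP uJ.
set a := row l Q; set b := col l (invmx W).
have a0 : a != 0.
  apply/eqP => Ha.
  have : (row l Q *m invmx Q) 0 l = 1 by rewrite -row_mul mulmxV // !mxE eqxx.
  by rewrite -/a Ha mul0mx mxE => /eqP; rewrite eq_sym oner_eq0.
have b0 : b^T != 0.
  apply/eqP => Hb.
  have : (W *m b) l 0 = 1.
    have E : (W *m invmx W) l l = 1 by rewrite mulmxV // mxE eqxx.
    by rewrite -E !mxE; apply: eq_bigr => j _; rewrite !mxE.
  by rewrite -(trmxK b) Hb trmx0 mulmx0 mxE => /eqP; rewrite eq_sym oner_eq0.
pose S := a^T *m b^T + b *m a.
exists S.
  by rewrite /S /= linearD /= !trmx_mul !trmxK addrC.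
rewrite /= /gS /=.
set X := P *m (J *m S).
pose Z := invmx L *m X *m invmx W.
have eX : X = L *m Z *m W.
  by rewrite /Z (mulmxA L) (mulmxA L) mulmxV // mul1mx -mulmxA mulVmx // mulmx1.
have eM : M = L *m pid_mx (\rank M) *m W by rewrite mulmx_ebase.
have fun_eq : (fun t : R => \det (M + t *: X)) =
    (\det L * \det W) \*: (fun t : R => \det (pid_mx (\rank M) + t *: Z)).
  rewrite funeqE => t /=.
  rewrite {1}eM eX scalemxAl scalemxAr -mulmxDl -mulmxDr !det_mulmx.
  by rewrite [in RHS]/GRing.scale /= mulrAC mulrC.
have h1 := det_derive M X.
have h2 := is_deriveZ (\det L * \det W) (det_derive (pid_mx (\rank M)) Z).
rewrite -fun_eq in h2.
have -> : Dd M X = (\det L * \det W) * Dd (pid_mx (\rank M)) Z.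
  by rewrite -(@derive_val _ _ _ _ _ _ _ h1) (@derive_val _ _ _ _ _ _ _ h2).
rewrite rkM (@Dd_pid _ Z l) //.
have eZ : Z l l = (a *m S *m b) 0 0.
  by rewrite /Z /X !mulmxA entry3.
rewrite eZ /S mulmxDr mulmxDl !mulmxA.
rewrite [X in _ * X]mxE -(mulmxA (a *m a^T)) -(mulmxA (a *m b)) !mul11.
have pa := rowpos a0.
have pb := rowpos b0; rewrite trmxK in pb.
have pab : 0 <= (a *m b) 0 0 * (a *m b) 0 0 by rewrite -expr2 sqr_ge0.
have dL : \det L != 0 by rewrite -unitfE -unitmxE.
have dW : \det W != 0 by rewrite -unitfE -unitmxE.
rewrite mulf_neq0 ?mulf_neq0 //.
rewrite lt0r_neq0 //.
by rewrite ltr_wpDr // mulr_gt0.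
Qed.
End S.

Theorem propositionA4 (R : realType) (n : nat) :
  exists U : set ('M[R]_(n.-1 + n.-1) * R),
    open U /\ @setG1 R n.-1 `<=` U /\
    (forall x, U x -> @setG R n.-1 x -> chi_submersive_at x).
Proof.
exists (@Uset R n.-1); split; first exact: Uset_open.
split; first exact: G1_in_U.
move=> [P mu] [S HS HgS] [HP _].
exists (P *m (symJ R n.-1 *m S)), 0; split; first exact: tangent_ok.
by rewrite /= chi_derive.
Qed.
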